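(* Consider searching on a line with turn cost $t\ge0$ and lower bound $\lambda>0$ (defined in the context), and suppose $\frac{t}{2\lambda}\le1$. Let $s=\frac{t}{2\lambda}$. Then the periodic strategy with distances $$x_i=\Big(\big((1-s)\,i+(1+s)\big)2^i-s\Big)\lambda,\qquad i\ge1,$$ has competitive ratio $9$, and it is optimal (no search strategy has competitive ratio less than $9$).
   Context: Searching on a line with turn cost. Fix $\lambda>0$, $t\ge 0$. A search strategy is a sequence $\mathcal S(i)=(x_i,r_i)$, $i\ge1$, with $x_i>0$, $r_i\in\{\mathrm{left},\mathrm{right}\}$ and $\sup\{x_i:r_i=\mathrm{left}\}=\sup\{x_i:r_i=\mathrm{right}\}=\infty$. At step $i$ the searcher walks distance $x_i$ from the origin along ray $r_i$ and, if the target is not found, walks back to the origin, paying an additional turn cost $t$; thus each unsuccessful step costs $2x_i+t$. The target is on one of the two rays at unknown distance $D\ge\lambda$ and is found at the first step $j$ with $r_j$ equal to its ray and $x_j\ge D$; the total cost is then $\sum_{i=1}^{j-1}(2x_i+t)+D$. The competitive ratio of $\mathcal S$ is the supremum over all target positions of total cost divided by $D$; a strategy is optimal if its competitive ratio is minimal among all search strategies. A periodic strategy with distances $x_i$ means $r_1\ne r_2$ and $r_{i+2}=r_i$ (the rays alternate). For a periodic strategy with increasing distances the competitive ratio equals $\max\Big\{\frac{2x_1+t+\lambda}{\lambda},\ \sup_{n\ge1}\frac{\sum_{i=1}^{n+1}(2x_i+t)+x_n}{x_n}\Big\}$. *)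

(* Defs.v *)
From Stdlib Require Import Reals Lra.
Open Scope R_scope.

(* A strategy: step i (i >= 1) goes distance x i along ray r i
   (rays encoded as bool: true/false = the two rays). Index 0 is unused. *)

(* Sum_{i=1}^{j-1} (2 x_i + t) *)
Fixpoint cost_before (x : nat -> R) (t : R) (j : nat) : R :=
  match j with
  | O => 0
  | S k => match k with
           | O => 0
           | _ => cost_before x t k + (2 * x k + t)
           end
  end.

Definition is_strategy (x : nat -> R) (r : nat -> bool) : Prop :=
  (forall i, (1 <= i)%nat -> 0 < x i) /\
  (forall (b : bool) (M : R), exists i, (1 <= i)%nat /\ r i = b /\ M < x i).

Definition found_at (x : nat -> R) (r : nat -> bool) (b : bool) (D : R) (j : nat) : Prop :=
  (1 <= j)%nat /\ r j = b /\ D <= x j /\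
  (forall i, (1 <= i)%nat -> (i < j)%nat -> ~ (r i = b /\ D <= x i)).

Definition ratios (lam t : R) (x : nat -> R) (r : nat -> bool) (q : R) : Prop :=
  exists (b : bool) (D : R) (j : nat),
    lam <= D /\ found_at x r b D j /\ q = (cost_before x t j + D) / D.

Definition comp_ratio_eq (lam t : R) (x : nat -> R) (r : nat -> bool) (c : R) : Prop :=
  is_lub (ratios lam t x r) c.

Definition periodic (r : nat -> bool) : Prop :=
  r 1%nat <> r 2%nat /\ forall i, (1 <= i)%nat -> r (i + 2)%nat = r i.

Definition xdist (lam t : R) (i : nat) : R :=
  let s := t / (2 * lam) in
  (((1 - s) * INR i + (1 + s)) * 2 ^ i - s) * lam.

(* Main.v *)
Require Import Defs.
From Stdlib Require Import Reals Lra Lia Classical Arith.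
Open Scope R_scope.

Fixpoint Ssum (x : nat -> R) (k : nat) : R :=
  match k with O => 0 | S k' => Ssum x k' + x (S k') end.

Fixpoint Mx (x : nat -> R) (r : nat -> bool) (b : bool) (k : nat) : R :=
  match k with
  | O => 0
  | S k' => if Bool.eqb (r (S k')) b then Rmax (Mx x r b k') (x (S k')) else Mx x r b k'
  end.

Lemma least (P : nat -> Prop) : (exists n, P n) -> exists n, P n /\ forall m, (m < n)%nat -> ~ P m.
Proof.
  intros [n Hn]. apply NNPP; intro H.
  assert (H0 : forall k m, (m <= k)%nat -> ~ P m).
  { induction k; intros m Hm Pm; apply H; exists m; split; auto; intros m' Hm' Pm'.
    - lia.
    - apply (IHk m'); [lia | exact Pm']. }
  exact (H0 n n (le_n n) Hn).
Qed.

Section S2.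
Variable x : nat -> R.
Variable r : nat -> bool.
Hypothesis pos : forall i, (1 <= i)%nat -> 0 < x i.

Lemma Mx_ge0 b k : 0 <= Mx x r b k.
Proof. induction k; simpl; [lra|]. destruct (Bool.eqb _ _); [|lra].
  apply Rle_trans with (Mx x r b k); [lra | apply Rmax_l]. Qed.

Lemma Mx_mono b k k' : (k <= k')%nat -> Mx x r b k <= Mx x r b k'.
Proof. induction 1; [lra|]. simpl. destruct (Bool.eqb _ _); [|lra].
  apply Rle_trans with (Mx x r b m); [lra | apply Rmax_l]. Qed.

Lemma Mx_ge b k i : (1 <= i)%nat -> (i <= k)%nat -> r i = b -> x i <= Mx x r b k.
Proof.
  intros H1 H2 H3. induction k; [lia|].
  destruct (Nat.eq_dec i (S k)) as [->|Hne].
  - simpl. rewrite H3, Bool.eqb_reflx. apply Rmax_r.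
  - apply Rle_trans with (Mx x r b k); [apply IHk; lia | apply Mx_mono; lia].
Qed.

Lemma Mx_le b k B : (forall i, (1 <= i)%nat -> (i <= k)%nat -> r i = b -> x i <= B) -> 0 <= B ->
  Mx x r b k <= B.
Proof.
  intros H HB. induction k; simpl; [lra|].
  assert (IH : Mx x r b k <= B) by (apply IHk; intros; apply H; auto; lia).
  destruct (Bool.eqb (r (S k)) b) eqn:E; [|lra].
  apply Bool.eqb_prop in E. apply Rmax_lub; [lra|]. apply H; auto; lia.
Qed.

Lemma Mx_att b k : 0 < Mx x r b k -> exists i, (1 <= i)%nat /\ (i <= k)%nat /\ r i = b /\ x i = Mx x r b k.
Proof.
  induction k; simpl; [lra|]. intro H.
  destruct (Bool.eqb (r (S k)) b) eqn:E.
  - apply Bool.eqb_prop in E. unfold Rmax in *. destruct (Rle_dec (Mx x r b k) (x (S k))).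
    + exists (S k). repeat split; auto; lia.
    + destruct (IHk H) as [i [? [? [? ?]]]]. exists i. repeat split; auto; lia.
  - destruct (IHk H) as [i [? [? [? ?]]]]. exists i. repeat split; auto; lia.
Qed.

Lemma Ssum_mono p k : (p <= k)%nat -> Ssum x p <= Ssum x k.
Proof. induction 1; [lra|]. simpl. pose proof (pos (S m)). assert (1 <= S m)%nat by lia. specialize (H0 H1). lra. Qed.

Lemma Ssum_lt p q : (p < q)%nat -> Ssum x p + x q <= Ssum x q.
Proof. intros H. destruct q; [lia|]. simpl. pose proof (Ssum_mono p q). assert (p <= q)%nat by lia. specialize (H0 H1). lra. Qed.

Lemma Ssum_pos p : (1 <= p)%nat -> 0 < Ssum x p.
Proof. intros H. pose proof (Ssum_lt 0 p). simpl in H0. pose proof (pos p H). assert (0 < p)%nat by lia. specialize (H0 H2). lra. Qed.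

Lemma cb_ge t k : 0 <= t -> 2 * Ssum x k <= cost_before x t (S k).
Proof.
  intros ht. induction k; [simpl; lra|].
  change (cost_before x t (S (S k))) with (cost_before x t (S k) + (2 * x (S k) + t)).
  change (Ssum x (S k)) with (Ssum x k + x (S k)). lra.
Qed.
End S2.


Lemma abstract_contra (f : nat -> R) (St : nat -> nat -> Prop) (C : R) : C < 4 ->
 (exists p q, St p q) -> (forall p q, St p q -> 0 < f p /\ f p < f q) ->
 (forall p q, St p q -> exists r, St q r /\ f r <= C * (f q - f p)) -> False.
Proof.
  intros HC [p0 [q0 H0]] Hpos Hstep.
  destruct (Hstep _ _ H0) as [r0 [H1 Hr0]].
  destruct (Hpos _ _ H0) as [a0 b0]. destruct (Hpos _ _ H1) as [a1 b1].
  assert (Cpos : 0 < C) by nra.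
  set (d := C * (4 - C) / 16).
  assert (dpos : 0 < d) by (unfold d; assert (0 < C * (4 - C)) by nra; lra).
  assert (Hind : forall n, exists p q, St p q /\ f q <= (C - INR n * d) * f p).
  { induction n.
    - exists q0, r0. split; auto. simpl. nra.
    - destruct IHn as [p [q [Hpq Hle]]]. destruct (Hstep _ _ Hpq) as [r [Hqr Hr]].
      exists q, r. split; auto. destruct (Hpos _ _ Hpq) as [ap bp]. rewrite S_INR.
      set (a := f p) in *. set (b := f q) in *. set (rho := C - INR n * d) in *.
      assert (Hn : 0 <= INR n) by apply pos_INR.
      assert (rhoC : rho <= C) by (unfold rho; nra).
      assert (Hb4 : b <= 4 * a) by nra.
      assert (Hq : b * b - C * a * b + C * a * a >= 4 * d * a * a).
      { unfold d. pose proof (Rle_0_sqr (b - C * a / 2)). unfold Rsqr in H. nra. }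
      assert (Hda : 0 < d * a) by nra.
      assert (Hd : d * a * b <= 4 * d * a * a) by nra.
      assert (Hrb : rho * a * b >= b * b) by nra.
      assert (Key : C * a * (b - a) <= (rho - d) * a * b) by nra.
      assert (Key2 : C * (b - a) <= (rho - d) * b).
      { apply (Rmult_le_reg_l a); [lra|]. nra. }
      replace (C - (INR n + 1) * d) with (rho - d) by (unfold rho; ring). lra. }
  assert (Hc : 0 < d / C) by (apply Rdiv_lt_0_compat; lra).
  destruct (archimed_cor1 _ Hc) as [N [HN HN0]].
  assert (HNpos : 0 < INR N) by (apply lt_0_INR; lia).
  assert (HCN : C < INR N * d).
  { assert (/ INR N * C < d / C * C) by (apply Rmult_lt_compat_r; lra).
    replace (d / C * C) with d in H by (field; lra).
    apply (Rmult_lt_reg_l (/ INR N)); [apply Rinv_0_lt_compat; lra|].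
    replace (/ INR N * (INR N * d)) with d by (field; lra). lra. }
  destruct (Hind N) as [p [q [Hpq Hle]]]. destruct (Hpos _ _ Hpq). nra.
Qed.


Definition Good (x : nat -> R) (r : nat -> bool) (lam : R) (q : nat) : Prop :=
  (1 <= q)%nat /\ x q = Mx x r (r q) q /\ lam <= x q /\
  exists g, (q < g)%nat /\ r g = negb (r q) /\ lam <= x g /\ Mx x r (negb (r q)) q < x g /\
   forall i, (q < i)%nat -> (i <= g)%nat -> r i = r q -> x i <= x q.

Section S4.
Variables (x : nat -> R) (r : nat -> bool) (lam t : R).
Hypothesis hlam : 0 < lam.
Hypothesis ht : 0 <= t.
Hypothesis hs : is_strategy x r.

Lemma pos : forall i, (1 <= i)%nat -> 0 < x i.
Proof. apply hs. Qed.

Lemma first_hit b q th : exists f, (q < f)%nat /\ r f = b /\ th < x f /\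
  forall i, (q < i)%nat -> (i < f)%nat -> r i = b -> x i <= th.
Proof.
  destruct hs as [_ unb].
  destruct (unb b (Rmax th (Mx x r b q))) as [i [Hi1 [Hri Hxi]]].
  destruct (least (fun i => (q < i)%nat /\ r i = b /\ th < x i)) as [f [[Hf1 [Hf2 Hf3]] Hmin]].
  { exists i. split; [|split; auto].
    - destruct (le_lt_dec i q); auto. exfalso.
      pose proof (Mx_ge x r b q i Hi1 l Hri). pose proof (Rmax_r th (Mx x r b q)). lra.
    - pose proof (Rmax_l th (Mx x r b q)). lra. }
  exists f. repeat split; auto.
  intros j Hj1 Hj2 Hj3. destruct (Rle_dec (x j) th); auto. exfalso.
  apply (Hmin j Hj2). repeat split; auto; lra.
Qed.

Lemma ray_lemma c : is_upper_bound (ratios lam t x r) c ->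
  forall b k, 2 * Ssum x k <= (c - 1) * Rmax (Mx x r b k) lam.
Proof.
  intros Hub b k. set (m := Rmax (Mx x r b k) lam).
  assert (Hm : lam <= m) by apply Rmax_r.
  assert (HD : forall D, m < D -> 2 * Ssum x k <= (c - 1) * D).
  { intros D HmD. destruct hs as [_ unb].
    destruct (unb b D) as [i0 [Hi1 [Hri Hxi]]].
    destruct (least (fun j => (1 <= j)%nat /\ r j = b /\ D <= x j)) as [j [[Hj1 [Hj2 Hj3]] Hmin]].
    { exists i0. repeat split; auto; lra. }
    assert (Hkj : (k < j)%nat).
    { destruct (le_lt_dec j k); auto. exfalso.
      pose proof (Mx_ge x r b k j Hj1 l Hj2). pose proof (Rmax_l (Mx x r b k) lam). fold m in H0. lra. }
    assert (Hr : ratios lam t x r ((cost_before x t j + D) / D)).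
    { exists b, D, j. split; [lra|]. split; auto.
      split; auto. split; auto. split; auto. intros i Hi Hij [Ha Hb]. apply (Hmin i Hij). auto. }
    specialize (Hub _ Hr).
    destruct j as [|j']; [lia|].
    pose proof (cb_ge x t j' ht).
    pose proof (Ssum_mono x pos k j'). assert (k <= j')%nat by lia. specialize (H0 H1).
    assert (0 < D) by lra.
    assert (cost_before x t (S j') + D <= c * D).
    { apply (Rmult_le_reg_r (/ D)); [apply Rinv_0_lt_compat; lra|].
      replace (c * D * / D) with c by (field; lra). exact Hub. }
    lra. }
  apply Rle_plus_epsilon. intros eps Heps.
  set (a := Rabs (c - 1)).
  assert (Ha : 0 <= a) by apply Rabs_pos.
  assert (Hca : c - 1 <= a) by apply RRle_abs.
  set (e := eps / (a + 1)).
  assert (He : 0 < e) by (unfold e; apply Rdiv_lt_0_compat; lra).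
  specialize (HD (m + e)). assert (m < m + e) by lra. specialize (HD H).
  assert (a * e <= eps).
  { unfold e. replace (a * (eps / (a + 1))) with (eps - eps / (a + 1)) by (field; lra).
    assert (0 < eps / (a + 1)) by (apply Rdiv_lt_0_compat; lra). lra. }
  assert ((c - 1) * e <= a * e) by (apply Rmult_le_compat_r; lra).
  lra.
Qed.

Lemma core2 b q th f : (q < f)%nat -> r f = negb b -> th < x f ->
  (forall i, (q < i)%nat -> (i < f)%nat -> r i = negb b -> x i <= th) ->
  Mx x r (negb b) q <= th -> lam <= th -> lam <= Mx x r b (pred f) ->
  exists q', Good x r lam q' /\ r q' = b /\ (q' < f)%nat /\ x q' = Mx x r b (pred f).
Proof.
  intros Hqf Hrf Hxf Hhit HM Hlth Hlam.
  destruct (Mx_att x r b (pred f)) as [q' [H1 [H2 [H3 H4]]]]; [lra|].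
  exists q'. split; [|split; [auto|split; [lia|auto]]].
  split; [auto|]. rewrite H3. split.
  { apply Rle_antisym. apply Mx_ge; auto. rewrite H4. apply Mx_mono; auto. }
  split; [lra|]. exists f. split; [lia|]. split; [auto|]. split; [lra|]. split.
  - apply Rle_lt_trans with th; auto. apply Mx_le; [|lra].
    intros i Hi1 Hi2 Hi3. destruct (le_lt_dec i q).
    + apply Rle_trans with (Mx x r (negb b) q); auto. apply Mx_ge; auto.
    + apply Hhit; auto; lia.
  - intros i Hi1 Hi2 Hi3. destruct (Nat.eq_dec i f) as [->|Hne].
    + rewrite Hrf in Hi3. destruct b; discriminate.
    + rewrite H4. apply Mx_ge; auto; lia.
Qed.

Lemma step q : Good x r lam q -> exists q', Good x r lam q' /\ (q < q')%nat /\ Mx x r (r q) q' = x q.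
Proof.
  intros [Hq1 [Hqm [Hql [g [Hg1 [Hg2 [Hg3 [Hg4 Hg5]]]]]]]].
  set (B := r q) in *.
  destruct (first_hit B q (x q)) as [f [Hf1 [Hf2 [Hf3 Hf4]]]].
  assert (Hgf : (g < f)%nat).
  { destruct (le_lt_dec f g); auto. exfalso. specialize (Hg5 f Hf1 l Hf2). lra. }
  assert (HgM : x g <= Mx x r (negb B) (pred f)) by (apply Mx_ge; auto; lia).
  destruct (core2 (negb B) q (x q) f) as [q' [G1 [G2 [G3 G4]]]]; auto.
  - rewrite Bool.negb_involutive. auto.
  - rewrite Bool.negb_involutive. auto.
  - rewrite Bool.negb_involutive. lra.
  - lra.
  - assert (Hqq : (q < q')%nat).
    { destruct (le_lt_dec q' q); auto. exfalso.
      pose proof (Mx_ge x r (negb B) q q'). assert (1 <= q')%nat by apply G1.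
      specialize (H H0 l G2). lra. }
    exists q'. split; auto. split; auto. apply Rle_antisym.
    + apply Mx_le; [|lra]. intros i Hi1 Hi2 Hi3. destruct (le_lt_dec i q).
      * rewrite Hqm. apply Mx_ge; auto.
      * apply Hf4; auto; lia.
    + apply Mx_ge; auto; lia.
Qed.

Lemma init : exists q, Good x r lam q.
Proof.
  destruct hs as [_ unb].
  destruct (unb true lam) as [A [HA1 [HA2 HA3]]].
  destruct (first_hit false A (Rmax (Mx x r false A) lam)) as [f [Hf1 [Hf2 [Hf3 Hf4]]]].
  destruct (core2 true A (Rmax (Mx x r false A) lam) f) as [q' [G1 _]]; auto.
  - apply Rmax_l.
  - apply Rmax_r.
  - apply Rle_trans with (x A); [lra|]. apply Mx_ge; auto; lia.
  - exists q'; auto.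
Qed.

Lemma part2 c : is_upper_bound (ratios lam t x r) c -> 9 <= c.
Proof.
  intros Hub. destruct (Rle_lt_dec 9 c) as [|Hc]; auto. exfalso.
  pose proof (ray_lemma c Hub) as Hray.
  apply (abstract_contra (Ssum x) (fun p q => (1 <= p)%nat /\ (p < q)%nat /\ Good x r lam q) ((c - 1) / 2)).
  - lra.
  - destruct init as [q0 G0]. destruct (step q0 G0) as [q1 [G1 [H1 _]]].
    exists q0, q1. split; [apply G0|]. auto.
  - intros p q [H1 [H2 _]]. split. apply Ssum_pos; auto. exact pos.
    pose proof (Ssum_lt x pos p q H2). pose proof (pos q). assert (1 <= q)%nat by lia.
    specialize (H0 H3). lra.
  - intros p q [H1 [H2 G]]. destruct (step q G) as [q' [G' [Hqq HM]]].
    exists q'. split. split; [apply G|]. auto.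
    specialize (Hray (r q) q'). rewrite HM in Hray.
    assert (Hlx : lam <= x q) by apply G.
    rewrite Rmax_left in Hray by lra.
    pose proof (Ssum_lt x pos p q H2).
    pose proof (Ssum_pos x pos q' ltac:(lia)).
    pose proof (pos q ltac:(lia)).
    assert (0 < c - 1) by nra.
    assert ((c - 1) * x q <= (c - 1) * (Ssum x q - Ssum x p)) by (apply Rmult_le_compat_l; lra).
    lra.
Qed.
End S4.


Section S5.
Variables (lam t : R).
Hypothesis hlam : 0 < lam.
Hypothesis ht : 0 <= t.
Hypothesis hs : t / (2 * lam) <= 1.

Lemma xd_eq i : xdist lam t i =
  (((1 - t / (2 * lam)) * INR i + (1 + t / (2 * lam))) * 2 ^ i - t / (2 * lam)) * lam.
Proof. reflexivity. Qed.

Lemma s_nonneg : 0 <= t / (2 * lam).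
Proof. apply Rmult_le_pos; auto. apply Rlt_le, Rinv_0_lt_compat. lra. Qed.

Lemma t_eq : t = 2 * lam * (t / (2 * lam)).
Proof. field. lra. Qed.

Lemma xd_ge i : 2 ^ i * lam <= xdist lam t i.
Proof.
  rewrite xd_eq. pose proof s_nonneg. set (s := t / (2 * lam)) in *.
  pose proof (pos_INR i). pose proof (pow_R1_Rle 2 i ltac:(lra)).
  apply Rmult_le_compat_r; [lra|].
  assert (0 <= (1 - s) * INR i) by (apply Rmult_le_pos; lra).
  assert (0 <= (1 - s) * INR i * 2 ^ i) by (apply Rmult_le_pos; lra).
  assert (0 <= s * (2 ^ i - 1)) by (apply Rmult_le_pos; lra). nra.
Qed.

Lemma INR_lt_pow2 n : INR n < 2 ^ n.
Proof.
  induction n; [simpl; lra|]. rewrite S_INR. simpl pow.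
  pose proof (pow_R1_Rle 2 n ltac:(lra)). lra.
Qed.

Lemma cb_id n : cost_before (xdist lam t) t (S (S (S n))) = 8 * xdist lam t (S n).
Proof.
  induction n.
  - change (cost_before (xdist lam t) t 3) with
      (0 + (2 * xdist lam t 1 + t) + (2 * xdist lam t 2 + t)).
    rewrite !xd_eq. pose proof t_eq as Ht. set (s := t / (2 * lam)) in *. clearbody s. rewrite Ht. simpl. ring.
  - change (cost_before (xdist lam t) t (S (S (S (S n))))) with
      (cost_before (xdist lam t) t (S (S (S n))) + (2 * xdist lam t (S (S (S n))) + t)).
    rewrite IHn. rewrite !xd_eq. pose proof t_eq as Ht. set (s := t / (2 * lam)) in *. clearbody s. rewrite Ht.
    rewrite !S_INR. simpl. ring.
Qed.

Lemma alt r : periodic r -> forall i, (1 <= i)%nat -> r (S i) <> r i.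
Proof.
  intros [H12 Hp] i Hi. induction i; [lia|].
  destruct i.
  - auto.
  - intro E. replace (S (S (S i))) with (S i + 2)%nat in E by lia.
    rewrite Hp in E by lia. apply IHi; [lia|]. auto.
Qed.

Lemma part1 r : periodic r -> is_strategy (xdist lam t) r /\ comp_ratio_eq lam t (xdist lam t) r 9.
Proof.
  intros Hper. pose proof s_nonneg as Hs0.
  assert (Hpos : forall i, 0 < xdist lam t i).
  { intro i. apply Rlt_le_trans with (2 ^ i * lam); [|apply xd_ge].
    apply Rmult_lt_0_compat; [apply pow_lt; lra | auto]. }
  split.
  - split; [intros; apply Hpos|]. intros b M.
    destruct (INR_unbounded (M / lam)) as [n Hn].
    assert (Hn1 : (1 <= S n)%nat) by lia.
    assert (Hbig : forall i, (n <= i)%nat -> M < xdist lam t i).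
    { intros i Hi. apply Rlt_le_trans with (2 ^ i * lam); [|apply xd_ge].
      pose proof (INR_lt_pow2 i). pose proof (le_INR _ _ Hi).
      assert (M = M / lam * lam) by (field; lra). rewrite H1.
      apply Rmult_lt_compat_r; auto. lra. }
    pose proof (alt r Hper (S n) Hn1).
    destruct (Bool.bool_dec (r (S n)) b) as [E|E].
    + exists (S n). split; [lia|]. split; [auto|apply Hbig; lia].
    + exists (S (S n)). split; [lia|]. split; [|apply Hbig; lia].
      destruct (r (S (S n))), (r (S n)), b; congruence.
  - destruct Hper as [H12 Hp]. split.
    + intros q [b [D [j [HD [[Hj1 [Hrj [HDx Hmin]]] ->]]]]].
      assert (HD0 : 0 < D) by lra.
      assert (Hcb : cost_before (xdist lam t) t j <= 8 * D).
      { destruct j as [|[|[|n]]].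
        - lia.
        - simpl. lra.
        - change (cost_before (xdist lam t) t 2) with (0 + (2 * xdist lam t 1 + t)).
          rewrite xd_eq. pose proof t_eq as Ht. set (s := t / (2 * lam)) in *. clearbody s. rewrite Ht. simpl. lra.
        - rewrite cb_id. assert (HDn : xdist lam t (S n) < D).
          { destruct (Rlt_le_dec (xdist lam t (S n)) D) as [|Hle]; auto. exfalso.
            apply (Hmin (S n)); [lia|lia|]. split; auto.
            replace (S (S (S n))) with (S n + 2)%nat in Hrj by lia. rewrite Hp in Hrj by lia. auto. }
          lra. }
      apply (Rmult_le_reg_r D); auto. unfold Rdiv. rewrite Rmult_assoc, Rinv_l by lra. lra.
    + intros c Hc. apply Hc. exists (r 2%nat), lam, 2%nat. split; [lra|]. split.
      * split; [lia|]. split; auto. split.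
        { rewrite xd_eq. simpl. set (s := t / (2 * lam)) in *. nra. }
        intros i Hi1 Hi2 [Hri _]. assert (i = 1%nat) by lia. subst. auto.
      * change (cost_before (xdist lam t) t 2) with (0 + (2 * xdist lam t 1 + t)).
        rewrite xd_eq. pose proof t_eq as Ht. set (s := t / (2 * lam)) in *. clearbody s. rewrite Ht. simpl. field. lra.
Qed.
End S5.


Theorem lemma1 (lam t : R) (hlam : 0 < lam) (ht : 0 <= t)
  (hs : t / (2 * lam) <= 1) :
  (forall r : nat -> bool, periodic r ->
     is_strategy (xdist lam t) r /\ comp_ratio_eq lam t (xdist lam t) r 9) /\
  (forall (x : nat -> R) (r : nat -> bool), is_strategy x r ->
     forall c, is_upper_bound (ratios lam t x r) c -> 9 <= c).
Proof.
  split.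
  - intros r Hr. exact (part1 lam t hlam ht hs r Hr).
  - intros x r Hs c Hc. exact (part2 x r lam t hlam ht Hs c Hc).
Qed.
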